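(* For $\varepsilon\in(0,1/256]$, the number of pairs $(\mathcal S(\tau),\rho)$ with $\tau\in\Gamma$ and $\rho\in\{1,\dots,\lceil1/\varepsilon\rceil\}^{|\tau|}$ is $(\lceil1/\varepsilon\rceil)^{O(\sqrt{C_\varepsilon})}$.
   Context: $C_\varepsilon=\lceil\log_{1+\varepsilon}(1/\varepsilon)\rceil$. $\Gamma$ is the set of integer vectors $\tau=(\tau_1,\dots,\tau_K)\in\mathbb{Z}_{\ge0}^K$ with $0\le K=|\tau|\le\lceil2\sqrt{C_\varepsilon}\rceil$, $\tau_k+k\le\tau_{k+1}$ for $k\in[K-1]$, and $\tau_K\le C_\varepsilon-1$. For a Minimum Knapsack instance with costs indexed so that $1=c_1\ge\dots\ge c_n$, and $\tau\in\Gamma$, $\mathcal S(\tau)=\{S_1,\dots,S_K,S_\infty\}$ with $S_k=\{i\in\{2,\dots,n\}:(1+\varepsilon)^{-\tau_k}\ge c_i>(1+\varepsilon)^{-\min\{\tau_k+k,C_\varepsilon\}}\}$ for $k\in[K]$, and $S_\infty=\{i\in\{2,\dots,n\}: c_i\le(1+\varepsilon)^{-C_\varepsilon}\text{ and } c_i<\min_{l\in S_K}c_l\}$ (the second condition omitted if $K=0$). *)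

(* Defs.v *)
From Stdlib Require Import Reals Lra Lia ZArith Arith List.
Import ListNotations.
Open Scope R_scope.

Definition Zceil (x : R) : Z :=
  let z := up x in
  if Rle_dec x (IZR z - 1) then (z - 1)%Z else z.

Definition nceil (x : R) : nat := Z.to_nat (Zceil x).

Definition C_eps (eps : R) : nat := nceil (ln (/ eps) / ln (1 + eps)).

(* 1-based access to tau = (tau_1, ..., tau_K) represented as a list *)
Definition nth1 (tau : list nat) (k : nat) : nat := nth (k - 1) tau 0%nat.

Definition inGamma (eps : R) (tau : list nat) : Prop :=
  let K := length tau in
  (INR K <= IZR (Zceil (2 * sqrt (INR (C_eps eps)))))
  /\ (forall k : nat, (1 <= k)%nat -> (k <= K - 1)%nat ->
        (nth1 tau k + k <= nth1 tau (k + 1))%nat)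
  /\ ((1 <= K)%nat -> (nth1 tau K <= C_eps eps - 1)%nat).

Definition idx2n (n : nat) : list nat := seq 2 (n - 1).

Definition S_k (eps : R) (n : nat) (c : nat -> R) (tau : list nat) (k : nat)
  : list nat :=
  filter (fun i =>
    if Rle_dec (c i) (/ (1 + eps) ^ (nth1 tau k)) then
      if Rlt_dec (/ (1 + eps) ^ (Nat.min (nth1 tau k + k) (C_eps eps))) (c i)
      then true else false
    else false) (idx2n n).

(* S_infty = { i in {2..n} : c_i <= (1+eps)^{-C_eps} and c_i < min_{l in S_K} c_l }
   (second condition omitted when K = 0; the minimum over an empty S_K is
   read as +infinity, i.e. the condition is then vacuous). *)
Definition S_inf (eps : R) (n : nat) (c : nat -> R) (tau : list nat) : list nat :=
  let K := length tau in
  filter (fun i =>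
    if Rle_dec (c i) (/ (1 + eps) ^ (C_eps eps)) then
      match K with
      | O => true
      | _ => forallb (fun l => if Rlt_dec (c i) (c l) then true else false)
                     (S_k eps n c tau K)
      end
    else false) (idx2n n).

Definition S_of (eps : R) (n : nat) (c : nat -> R) (tau : list nat)
  : list (list nat) :=
  map (S_k eps n c tau) (seq 1 (length tau)) ++ [S_inf eps n c tau].

Definition valid_rho (eps : R) (tau rho : list nat) : Prop :=
  length rho = length tau /\
  Forall (fun r => (1 <= r)%nat /\ (r <= nceil (/ eps))%nat) rho.

Definition admissible_pair (eps : R) (n : nat) (c : nat -> R)
  (p : list (list nat) * list nat) : Prop :=
  exists tau rho, inGamma eps tau /\ valid_rho eps tau rho /\
    p = (S_of eps n c tau, rho).

(* Main.v *)
Require Import Defs.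
From Stdlib Require Import Reals List Lra Lia ZArith Arith.
Import ListNotations.
Open Scope R_scope.

Lemma Zceil_spec x : x <= IZR (Defs.Zceil x) < x + 1.
Proof.
  unfold Defs.Zceil. destruct (archimed x) as [H1 H2].
  destruct (Rle_dec x (IZR (up x) - 1)).
  - rewrite minus_IZR. simpl. lra.
  - lra.
Qed.

Lemma nceil_spec x : 0 <= x -> INR (nceil x) = IZR (Defs.Zceil x).
Proof.
  intros Hx. unfold nceil. destruct (Zceil_spec x).
  assert (0 <= Defs.Zceil x)%Z by (apply le_IZR; lra).
  rewrite INR_IZR_INZ, Z2Nat.id; auto.
Qed.

Lemma ln_le_sub1 y : 0 < y -> ln y <= y - 1.
Proof.
  intros Hy. pose proof (exp_ineq1_le (y-1)).
  rewrite <- (ln_exp (y-1)).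
  destruct (Req_dec y (exp (y-1))) as [E|E].
  - rewrite <- E. lra.
  - left. apply ln_increasing; lra.
Qed.

Fixpoint allK {A} (D : list A) (K : nat) : list (list A) :=
  match K with
  | O => [nil]
  | S k => flat_map (fun x => map (cons x) (allK D k)) D
  end.

Lemma flat_map_len_le {A B} (f : A -> list B) (ks : list A) (b : nat) :
  (forall k, In k ks -> (length (f k) <= b)%nat) ->
  (length (flat_map f ks) <= length ks * b)%nat.
Proof.
  induction ks; simpl; intros H; [lia|].
  rewrite length_app. specialize (IHks (fun k Hk => H k (or_intror Hk))).
  specialize (H a (or_introl eq_refl)). lia.
Qed.

Lemma allK_len {A} (D : list A) K : (length (allK D K) <= length D ^ K)%nat.
Proof.
  induction K; simpl; auto.
  eapply Nat.le_trans.
  - apply (flat_map_len_le _ _ (length (allK D K))).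
    intros k _. rewrite length_map. lia.
  - apply Nat.mul_le_mono_l. exact IHK.
Qed.

Lemma allK_in {A} (D : list A) : forall l, (forall x, In x l -> In x D) ->
  In l (allK D (length l)).
Proof.
  induction l; simpl; intros H; auto.
  apply in_flat_map. exists a. split; auto.
  apply in_map. apply IHl. auto.
Qed.

Lemma mono_tau (tau : list nat) :
  (forall k : nat, (1 <= k)%nat -> (k <= length tau - 1)%nat ->
        (nth1 tau k + k <= nth1 tau (k + 1))%nat) ->
  forall d k, (1 <= k)%nat -> (k + d <= length tau)%nat ->
    (nth1 tau k <= nth1 tau (k + d))%nat.
Proof.
  intros H. induction d; intros k Hk Hd.
  - rewrite Nat.add_0_r. lia.
  - specialize (IHd k Hk ltac:(lia)).
    specialize (H (k + d)%nat ltac:(lia) ltac:(lia)).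
    replace (k + S d)%nat with (k + d + 1)%nat by lia. lia.
Qed.

Lemma C_bounds eps : 0 < eps -> eps <= / 256 ->
  (1 <= C_eps eps)%nat /\ (C_eps eps <= nceil (/ eps) ^ 3)%nat /\ 256 <= INR (nceil (/ eps)).
Proof.
  intros He He2.
  set (u := / eps).
  assert (Hu : 256 <= u).
  { unfold u. replace 256 with (/ / 256) by (field; lra).
    apply Rinv_le_contravar; lra. }
  assert (HN : u <= INR (nceil u)).
  { rewrite nceil_spec by lra. apply Zceil_spec. }
  set (N := INR (nceil u)) in *.
  assert (HA0 : 0 < ln u).
  { rewrite <- ln_1. apply ln_increasing; lra. }
  assert (HA1 : ln u <= u - 1) by (apply ln_le_sub1; lra).
  assert (Hw : / 2 <= / (1 + eps)) by (apply Rinv_le_contravar; lra).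
  assert (Hw2 : / (1 + eps) * (1 + eps) = 1) by (field; lra).
  assert (HB : eps / 2 <= ln (1 + eps)).
  { pose proof (ln_le_sub1 (/ (1 + eps)) ltac:(apply Rinv_0_lt_compat; lra)).
    rewrite ln_Rinv in H by lra. nra. }
  assert (HB' : / ln (1 + eps) <= 2 * u).
  { replace (2 * u) with (/ (eps / 2)) by (unfold u; field; lra).
    apply Rinv_le_contravar; lra. }
  assert (HBp : 0 < / ln (1 + eps)) by (apply Rinv_0_lt_compat; lra).
  set (x := ln u / ln (1 + eps)).
  assert (Hx0 : 0 < x) by (unfold x, Rdiv; nra).
  assert (Hx1 : x <= 2 * N ^ 2).
  { unfold x, Rdiv. simpl. nra. }
  assert (HC : INR (C_eps eps) = IZR (Defs.Zceil x)).
  { unfold C_eps. apply nceil_spec. lra. }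
  destruct (Zceil_spec x) as [Hc1 Hc2].
  split; [|split]; [| |lra].
  - assert (0 < INR (C_eps eps)) by lra.
    destruct (C_eps eps); simpl in *; lia || lra.
  - apply INR_le. rewrite pow_INR. fold N. simpl. nra.
Qed.

Theorem lemma6 :
  exists a : R, 0 < a /\
  forall (eps : R), 0 < eps -> eps <= / 256 ->
  forall (n : nat) (c : nat -> R),
    (1 <= n)%nat -> c 1%nat = 1 ->
    (forall i, (1 <= i)%nat -> (i < n)%nat -> c (S i) <= c i) ->
  forall L : list (list (list nat) * list nat),
    NoDup L ->
    (forall p, In p L -> admissible_pair eps n c p) ->
    INR (length L) <= Rpower (INR (nceil (/ eps))) (a * sqrt (INR (C_eps eps))).
Proof.
  exists 15. split; [lra|].
  intros eps He He2 n c _ _ _ L HL Hadm.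
  destruct (C_bounds eps He He2) as [HC1 [HC2 HN]].
  set (N := nceil (/ eps)) in *.
  set (C := C_eps eps) in *.
  set (M := nceil (2 * sqrt (INR C))).
  assert (HsC : 1 <= sqrt (INR C)).
  { rewrite <- sqrt_1. apply sqrt_le_1_alt. apply (le_INR 1). exact HC1. }
  assert (HM : INR M = IZR (Defs.Zceil (2 * sqrt (INR C)))).
  { apply nceil_spec. lra. }
  assert (HN1 : (1 < N)%nat).
  { apply INR_lt. simpl. lra. }
  set (E := flat_map (fun K => list_prod (allK (seq 0 C) K) (allK (seq 1 N) K)) (seq 0 (S M))).
  set (g := fun p : list nat * list nat => (S_of eps n c (fst p), snd p)).
  assert (Hincl : incl L (map g E)).
  { intros p Hp. destruct (Hadm p Hp) as [tau [rho [[HG1 [HG2 HG3]] [[Hr1 Hr2] ->]]]].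
    change (S_of eps n c tau, rho) with (g (tau, rho)). apply in_map.
    unfold E. apply in_flat_map. exists (length tau). split.
    - apply in_seq. split; [lia|].
      assert (length tau <= M)%nat. { apply INR_le. fold C in HG1. lra. } lia.
    - apply in_prod.
      + apply allK_in. intros x Hx. apply in_seq.
        destruct (In_nth _ _ 0%nat Hx) as [i [Hi Hix]].
        assert (Hm := mono_tau tau HG2 (length tau - (i + 1)) (i + 1) ltac:(lia) ltac:(lia)).
        replace (i + 1 + (length tau - (i + 1)))%nat with (length tau) in Hm by lia.
        unfold nth1 in Hm. replace (i + 1 - 1)%nat with i in Hm by lia.
        specialize (HG3 ltac:(lia)). fold C in HG3. unfold nth1 in HG3. lia.
      + rewrite <- Hr1. apply allK_in. intros x Hx. rewrite Forall_forall in Hr2.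
        specialize (Hr2 x Hx). fold N in Hr2. apply in_seq. lia. }
  assert (Hlen : (length L <= length E)%nat).
  { rewrite <- (length_map g E). apply NoDup_incl_length; auto. }
  assert (HE : (length E <= S M * (C ^ M * N ^ M))%nat).
  { unfold E. rewrite <- (length_seq (S M) 0) at 2. apply flat_map_len_le.
    intros k Hk. apply in_seq in Hk. rewrite length_prod.
    apply Nat.mul_le_mono.
    - eapply Nat.le_trans; [apply allK_len|]. rewrite length_seq.
      apply Nat.pow_le_mono_r; lia.
    - eapply Nat.le_trans; [apply allK_len|]. rewrite length_seq.
      apply Nat.pow_le_mono_r; lia. }
  assert (HE2 : (S M * (C ^ M * N ^ M) <= N ^ (5 * M))%nat).
  { assert (H1 : (S M <= N ^ M)%nat) by (apply Nat.pow_gt_lin_r; lia).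
    assert (H2 : (C ^ M <= N ^ (3 * M))%nat).
    { rewrite Nat.pow_mul_r. apply Nat.pow_le_mono_l. exact HC2. }
    replace (5 * M)%nat with (M + (3 * M + M))%nat by lia.
    rewrite !Nat.pow_add_r. apply Nat.mul_le_mono; [exact H1|].
    apply Nat.mul_le_mono; lia. }
  assert (Hfin : (length L <= N ^ (5 * M))%nat) by lia.
  apply le_INR in Hfin. eapply Rle_trans; [exact Hfin|].
  rewrite pow_INR, <- Rpower_pow by lra.
  apply Rle_Rpower; [lra|].
  rewrite mult_INR. destruct (Zceil_spec (2 * sqrt (INR C))).
  simpl. nra.
Qed.
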